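(* Let $(X,d)$ be a compact metric space and $f\colon X\to X$ a continuous map that is c-expansive or equicontinuous. If $f$ has the shadowing property, then $f$ has the limit shadowing property.
   Context: For a continuous surjection $f$, let $X_f=\{(x_i)_{i\in\mathbb{Z}}\in X^{\mathbb{Z}}: f(x_i)=x_{i+1}\ \forall i\}$; $f$ is c-expansive if there is $e>0$ such that for $(x_i),(y_i)\in X_f$, $d(x_i,y_i)\le e$ for all $i\in\mathbb{Z}$ implies $(x_i)=(y_i)$. $f$ is equicontinuous if for every $\epsilon>0$ there is $\delta>0$ such that $d(x,y)\le\delta$ implies $\sup_{n\ge0}d(f^n(x),f^n(y))\le\epsilon$. Shadowing property: for every $\epsilon>0$ there is $\delta>0$ such that every sequence $(x_i)_{i\ge0}$ with $d(f(x_i),x_{i+1})\le\delta$ for all $i$ admits $x\in X$ with $d(x_i,f^i(x))\le\epsilon$ for all $i$. Limit shadowing property: every sequence $(x_i)_{i\ge0}$ with $\lim_i d(f(x_i),x_{i+1})=0$ admits $y\in X$ with $\lim_i d(x_i,f^i(y))=0$. *)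

(* Defs.v *)
From Stdlib Require Import Reals List ZArith.
Open Scope R_scope.

Definition is_metric {X : Type} (d : X -> X -> R) : Prop :=
  (forall x y, 0 <= d x y) /\
  (forall x y, d x y = 0 <-> x = y) /\
  (forall x y, d x y = d y x) /\
  (forall x y z, d x z <= d x y + d y z).

Definition is_open {X : Type} (d : X -> X -> R) (U : X -> Prop) : Prop :=
  forall x, U x -> exists r, 0 < r /\ forall y, d x y < r -> U y.

Definition is_compact {X : Type} (d : X -> X -> R) : Prop :=
  forall (I : Type) (U : I -> X -> Prop),
    (forall i, is_open d (U i)) ->
    (forall x, exists i, U i x) ->
    exists l : list I, forall x, exists i, In i l /\ U i x.

Definition is_continuous {X : Type} (d : X -> X -> R) (f : X -> X) : Prop :=
  forall x eps, 0 < eps ->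
    exists delta, 0 < delta /\ forall y, d x y < delta -> d (f x) (f y) < eps.

Definition in_Xf {X : Type} (f : X -> X) (x : Z -> X) : Prop :=
  forall i : Z, f (x i) = x (i + 1)%Z.

Definition c_expansive {X : Type} (d : X -> X -> R) (f : X -> X) : Prop :=
  exists e, 0 < e /\
    forall x y : Z -> X, in_Xf f x -> in_Xf f y ->
      (forall i : Z, d (x i) (y i) <= e) -> x = y.

(* sup_{n>=0} d(f^n x, f^n y) <= eps, written pointwise. *)
Definition equicontinuous {X : Type} (d : X -> X -> R) (f : X -> X) : Prop :=
  forall eps, 0 < eps -> exists delta, 0 < delta /\
    forall x y, d x y <= delta ->
      forall n : nat, d (Nat.iter n f x) (Nat.iter n f y) <= eps.

Definition shadowing {X : Type} (d : X -> X -> R) (f : X -> X) : Prop :=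
  forall eps, 0 < eps -> exists delta, 0 < delta /\
    forall xs : nat -> X, (forall i, d (f (xs i)) (xs (S i)) <= delta) ->
      exists x, forall i, d (xs i) (Nat.iter i f x) <= eps.

Definition limit_shadowing {X : Type} (d : X -> X -> R) (f : X -> X) : Prop :=
  forall xs : nat -> X, Un_cv (fun i => d (f (xs i)) (xs (S i))) 0 ->
    exists y, Un_cv (fun i => d (xs i) (Nat.iter i f y)) 0.

(* Main.v *)
Require Import Defs.
From Stdlib Require Import Reals List ZArith Lra Lia Classical IndefiniteDescription.
Open Scope R_scope.

Lemma d_nonneg {X} (d : X -> X -> R) : is_metric d -> forall x y, 0 <= d x y.
Proof. intros [h _]; exact h. Qed.
Lemma d_refl {X} (d : X -> X -> R) : is_metric d -> forall x, d x x = 0.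
Proof. intros [_ [h _]] x; apply h; reflexivity. Qed.
Lemma d_eq {X} (d : X -> X -> R) : is_metric d -> forall x y, d x y = 0 -> x = y.
Proof. intros [_ [h _]] x y; apply h. Qed.
Lemma d_sym {X} (d : X -> X -> R) : is_metric d -> forall x y, d x y = d y x.
Proof. intros [_ [_ [h _]]]; exact h. Qed.
Lemma d_tri {X} (d : X -> X -> R) : is_metric d -> forall x y z, d x z <= d x y + d y z.
Proof. intros [_ [_ [_ h]]]; exact h. Qed.

Definition conv {X} (d : X -> X -> R) (s : nat -> X) (c : X) : Prop :=
  forall eta, 0 < eta -> exists N, forall k, (N <= k)%nat -> d (s k) c < eta.

Lemma inv_Sk_pos (k : nat) : 0 < / INR (S k).
Proof. apply Rinv_0_lt_compat, lt_0_INR; lia. Qed.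

Lemma archi (tau : R) : 0 < tau -> exists N, forall k, (N <= k)%nat -> / INR (S k) < tau.
Proof.
  intros Ht. destruct (archimed (/ tau)) as [H1 _].
  assert (H0 : 0 < / tau) by (apply Rinv_0_lt_compat; lra).
  assert (Hup : (0 < up (/ tau))%Z) by (apply lt_IZR; lra).
  exists (Z.to_nat (up (/ tau))). intros k Hk.
  assert (HI : IZR (up (/ tau)) <= INR (S k)).
  { rewrite <- (Z2Nat.id (up (/tau))) by lia. rewrite <- INR_IZR_INZ.
    apply le_INR; lia. }
  assert (Hpos : 0 < INR (S k)) by (apply lt_0_INR; lia).
  apply Rle_lt_trans with (/ IZR (up (/ tau))).
  - apply Rinv_le_contravar; lra.
  - rewrite <- (Rinv_inv tau) at 2. apply Rinv_lt_contravar; [apply Rmult_lt_0_compat|]; lra.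
Qed.

Lemma cluster {X} (d : X -> X -> R) (hd : is_metric d) (hX : is_compact d) (u : nat -> X) :
  exists c, forall eta, 0 < eta -> forall N, exists m, (N <= m)%nat /\ d (u m) c < eta.
Proof.
  apply NNPP; intro Hn.
  assert (H : forall c, exists eta N, 0 < eta /\ forall m, (N <= m)%nat -> eta <= d (u m) c).
  { intro c. apply NNPP; intro H1. apply Hn. exists c. intros eta Heta N.
    apply NNPP; intro H2. apply H1. exists eta, N. split; auto. intros m Hm.
    apply Rnot_lt_le. intro H3. apply H2. exists m; auto. }
  set (U := fun (i : X * R * nat) (x : X) =>
     d (fst (fst i)) x < snd (fst i) /\ 0 < snd (fst i) /\
     forall m, (snd i <= m)%nat -> snd (fst i) <= d (u m) (fst (fst i))).
  destruct (hX _ U) as [l Hl].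
  - intros i x [H1 [H2 H3]]. exists (snd (fst i) - d (fst (fst i)) x). split; [lra|].
    intros y Hy. split; [|split; auto].
    pose proof (d_tri d hd (fst (fst i)) x y). lra.
  - intro x. destruct (H x) as [eta [N [He HN]]]. exists (x, eta, N). unfold U; simpl.
    rewrite d_refl by auto. split; [lra|split; auto].
  - set (Nm := fold_right (fun (i : X * R * nat) acc => Nat.max (snd i) acc) 0%nat l).
    assert (HNm : forall i, In i l -> (snd i <= Nm)%nat).
    { unfold Nm. clear. induction l as [|a l IH]; simpl; [tauto|].
      intros i [->|Hi]; [lia|]. specialize (IH i Hi). lia. }
    destruct (Hl (u Nm)) as [i [Hin [H1 [H2 H3]]]].
    specialize (H3 Nm (HNm i Hin)). rewrite d_sym in H3 by auto. lra.
Qed.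

Lemma seqcompact {X} (d : X -> X -> R) (hd : is_metric d) (hX : is_compact d) (u : nat -> X) :
  exists c (sg : nat -> nat), (forall k, (k <= sg k)%nat) /\ conv d (fun k => u (sg k)) c.
Proof.
  destruct (cluster d hd hX u) as [c Hc].
  destruct (functional_choice (fun k m => (k <= m)%nat /\ d (u m) c < / INR (S k)))
    as [sg Hsg].
  { intro k. apply (Hc _ (inv_Sk_pos k) k). }
  exists c, sg. split; [intro k; apply Hsg|].
  intros eta He. destruct (archi eta He) as [N HN]. exists N. intros k Hk.
  specialize (Hsg k). specialize (HN k Hk). lra.
Qed.

Lemma iter_cont {X} (d : X -> X -> R) (f : X -> X) :
  is_continuous d f -> forall n, is_continuous d (Nat.iter n f).
Proof.
  intros hf n. induction n as [|n IH]; intros x eps He.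
  - exists eps. split; auto.
  - destruct (hf (Nat.iter n f x) eps He) as [d1 [Hd1 H1]].
    destruct (IH x d1 Hd1) as [d2 [Hd2 H2]].
    exists d2. split; auto. intros y Hy. simpl. apply H1, H2, Hy.
Qed.

Lemma conv_map {X} (d : X -> X -> R) (hd : is_metric d) (g : X -> X) s c :
  is_continuous d g -> conv d s c -> conv d (fun k => g (s k)) (g c).
Proof.
  intros hg hs eta He. destruct (hg c eta He) as [de [Hde H]].
  destruct (hs de Hde) as [N HN]. exists N. intros k Hk.
  rewrite d_sym by auto. apply H. rewrite d_sym by auto. apply HN, Hk.
Qed.

Lemma conv_sub {X} (d : X -> X -> R) s c (sg : nat -> nat) :
  conv d s c -> (forall k, (k <= sg k)%nat) -> conv d (fun k => s (sg k)) c.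
Proof.
  intros hs hsg eta He. destruct (hs eta He) as [N HN]. exists N. intros k Hk.
  apply HN. specialize (hsg k). lia.
Qed.

Lemma conv_dist_le {X} (d : X -> X -> R) (hd : is_metric d) s t c c' e N0 :
  conv d s c -> conv d t c' -> (forall k, (N0 <= k)%nat -> d (s k) (t k) <= e) ->
  d c c' <= e.
Proof.
  intros hs ht H. apply Rnot_lt_le. intro Hlt.
  set (eta := (d c c' - e) / 2).
  assert (He : 0 < eta) by (unfold eta; lra).
  destruct (hs eta He) as [N1 H1]. destruct (ht eta He) as [N2 H2].
  set (k := (N0 + N1 + N2)%nat).
  specialize (H k ltac:(unfold k; lia)). specialize (H1 k ltac:(unfold k; lia)).
  specialize (H2 k ltac:(unfold k; lia)).
  pose proof (d_tri d hd c (s k) c'). pose proof (d_tri d hd (s k) (t k) c').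
  rewrite (d_sym d hd c (s k)) in *. unfold eta in *. lra.
Qed.

Lemma conv_dist_ge {X} (d : X -> X -> R) (hd : is_metric d) s t c c' e N0 :
  conv d s c -> conv d t c' -> (forall k, (N0 <= k)%nat -> e <= d (s k) (t k)) ->
  e <= d c c'.
Proof.
  intros hs ht H. apply Rnot_lt_le. intro Hlt.
  set (eta := (e - d c c') / 2).
  assert (He : 0 < eta) by (unfold eta; lra).
  destruct (hs eta He) as [N1 H1]. destruct (ht eta He) as [N2 H2].
  set (k := (N0 + N1 + N2)%nat).
  specialize (H k ltac:(unfold k; lia)). specialize (H1 k ltac:(unfold k; lia)).
  specialize (H2 k ltac:(unfold k; lia)).
  pose proof (d_tri d hd (s k) c (t k)). pose proof (d_tri d hd c c' (t k)).
  rewrite (d_sym d hd c' (t k)) in *. unfold eta in *. lra.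
Qed.

Lemma conv_unique {X} (d : X -> X -> R) (hd : is_metric d) s c c' :
  conv d s c -> conv d s c' -> c = c'.
Proof.
  intros h1 h2. apply (d_eq d hd).
  pose proof (conv_dist_le d hd s s c c' 0 0 h1 h2).
  pose proof (d_nonneg d hd c c').
  assert (d c c' <= 0); [|lra]. apply H. intros. rewrite d_refl; auto; lra.
Qed.

Lemma mod_S (k P : nat) : (0 < P)%nat ->
  (S k mod P = S (k mod P))%nat \/ (S k mod P = 0 /\ S (k mod P) = P)%nat.
Proof.
  intros HP. pose proof (Nat.div_mod_eq k P) as Hk.
  pose proof (Nat.mod_upper_bound k P ltac:(lia)) as Hq.
  destruct (Nat.lt_ge_cases (S (k mod P)) P) as [Hl|Hl].
  - left. symmetry. apply (Nat.mod_unique _ _ (k / P)); lia.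
  - right. split; [|lia]. symmetry. apply (Nat.mod_unique _ _ (S (k / P))); [lia|].
    rewrite Nat.mul_succ_r. lia.
Qed.

Lemma full_shadow {X} (d : X -> X -> R) (f : X -> X) (hd : is_metric d)
  (hX : is_compact d) (hf : is_continuous d f) (hsh : shadowing d f) (xs : nat -> X) :
  Un_cv (fun i => d (f (xs i)) (xs (S i))) 0 ->
  forall eps, 0 < eps -> exists z K, forall i, (K <= i)%nat -> d (xs i) (Nat.iter i f z) <= eps.
Proof.
  intros Hxs eps He. destruct (hsh eps He) as [del [Hdel Hsh]].
  destruct (Hxs (del / 2)) as [M HM]; [lra|].
  assert (HM' : forall n, (n >= M)%nat -> d (f (xs n)) (xs (S n)) < del / 2).
  { intros n Hn. specialize (HM n Hn). unfold R_dist in HM.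
    rewrite Rminus_0_r, Rabs_pos_eq in HM by apply (d_nonneg d hd). exact HM. }
  destruct (cluster d hd hX xs) as [c Hc].
  destruct (hf c (del / 4)) as [g [Hg Hfc]]; [lra|].
  destruct (Hc g Hg M) as [a [Ha Hac]].
  destruct (Hc g Hg (S a)) as [b [Hb Hbc]].
  set (P := (b - a)%nat).
  set (r := fun i => if (i <=? b)%nat then (b - (b - i) mod P)%nat else i).
  assert (r_le : forall i, (i <= b)%nat -> r i = (b - (b - i) mod P)%nat).
  { intros i Hi. unfold r. rewrite (proj2 (Nat.leb_le i b) Hi). reflexivity. }
  assert (r_gt : forall i, (b < i)%nat -> r i = i).
  { intros i Hi. unfold r. destruct (Nat.leb_spec i b); [lia|reflexivity]. }
  assert (Hjump : forall i, (r (S i) = S (r i) /\ (M <= r i)%nat) \/ (r i = b /\ r (S i) = S a)).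
  { intro i. destruct (Nat.lt_ge_cases i b) as [Hi|Hi].
    - rewrite (r_le i) by lia. rewrite (r_le (S i)) by lia.
      replace (b - i)%nat with (S (b - S i)) by lia.
      pose proof (Nat.mod_upper_bound (b - S i) P ltac:(unfold P; lia)).
      pose proof (Nat.mod_upper_bound (S (b - S i)) P ltac:(unfold P; lia)).
      destruct (mod_S (b - S i) P ltac:(unfold P; lia)) as [Hm|[H1 H2]].
      + left. rewrite Hm in *. unfold P in *. lia.
      + right. rewrite H1. unfold P in *. lia.
    - destruct (Nat.eq_dec i b) as [->|Hne].
      + left. rewrite (r_le b) by lia. rewrite (r_gt (S b)) by lia.
        rewrite Nat.sub_diag, Nat.Div0.mod_0_l by (unfold P; lia). lia.
      + left. rewrite !r_gt by lia. lia. }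
  destruct (Hsh (fun i => xs (r i))) as [z Hz].
  - intro i. destruct (Hjump i) as [[H1 H2]|[H1 H2]]; [rewrite H1|rewrite H1, H2].
    + specialize (HM' _ H2). lra.
    + assert (Hfa : d (f c) (f (xs a)) < del / 4) by (apply Hfc; rewrite d_sym; auto).
      assert (Hfb : d (f c) (f (xs b)) < del / 4) by (apply Hfc; rewrite d_sym; auto).
      specialize (HM' a Ha).
      pose proof (d_tri d hd (f (xs b)) (f c) (xs (S a))).
      pose proof (d_tri d hd (f c) (f (xs a)) (xs (S a))).
      rewrite (d_sym d hd (f (xs b)) (f c)) in *. lra.
  - exists z, (S b). intros i Hi. specialize (Hz i). simpl in Hz.
    rewrite (r_gt i) in Hz by lia. exact Hz.
Qed.

Lemma dc {T : Type} (Inv : nat -> T -> Prop) (link : T -> T -> Prop) (t0 : T) :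
  Inv 0%nat t0 -> (forall j t, Inv j t -> exists t', link t t' /\ Inv (S j) t') ->
  exists s : nat -> T, forall j, Inv j (s j) /\ link (s j) (s (S j)).
Proof.
  intros H0 H.
  destruct (functional_choice (fun (p : nat * T) t' =>
     Inv (fst p) (snd p) -> link (snd p) t' /\ Inv (S (fst p)) t')) as [G HG].
  { intros [j t]. destruct (classic (Inv j t)) as [Hi|Hi].
    - destruct (H j t Hi) as [t' Ht']. exists t'. auto.
    - exists t0. simpl. tauto. }
  set (s := fix s n := match n with O => t0 | S n => G (n, s n) end).
  assert (Hs : forall j, Inv j (s j)).
  { induction j as [|j IH]; [exact H0|]. exact (proj2 (HG (j, s j) IH)). }
  exists s. intro j. split; auto. exact (proj1 (HG (j, s j) (Hs j))).
Qed.

Lemma conv_ev {X} (d : X -> X -> R) s t c N :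
  (forall k, (N <= k)%nat -> s k = t k) -> conv d s c -> conv d t c.
Proof.
  intros He hs eta Heta. destruct (hs eta Heta) as [N1 H1]. exists (N + N1)%nat.
  intros k Hk. rewrite <- He by lia. apply H1. lia.
Qed.

Lemma exp_asym {X} (d : X -> X -> R) (f : X -> X) (hd : is_metric d)
  (hX : is_compact d) (hf : is_continuous d f) (e : R) (He : 0 < e)
  (hexp : forall x y : Z -> X, in_Xf f x -> in_Xf f y ->
      (forall i : Z, d (x i) (y i) <= e) -> x = y)
  (a b : X) (K : nat) (Hab : forall n, (K <= n)%nat -> d (Nat.iter n f a) (Nat.iter n f b) <= e) :
  forall tau, 0 < tau -> exists N, forall n, (N <= n)%nat -> d (Nat.iter n f a) (Nat.iter n f b) < tau.
Proof.
  apply NNPP. intro Hn.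
  assert (Ht : exists tau, 0 < tau /\ forall N, exists n, (N <= n)%nat /\
                 tau <= d (Nat.iter n f a) (Nat.iter n f b)).
  { apply NNPP; intro H1. apply Hn. intros tau Htau. apply NNPP; intro H2.
    apply H1. exists tau. split; auto. intro N. apply NNPP; intro H3. apply H2.
    exists N. intros n Hnn. apply Rnot_le_lt. intro H4. apply H3. exists n; auto. }
  clear Hn. destruct Ht as [tau [Htau Ht]].
  destruct (functional_choice (fun m n => (m + K <= n)%nat /\
              tau <= d (Nat.iter n f a) (Nat.iter n f b))) as [ns Hns0].
  { intro m. apply (Ht (m + K)%nat). }
  set (Inv := fun (j : nat) (t : (nat -> nat) * X * X) =>
     (forall k, (k <= fst (fst t) k)%nat) /\
     conv d (fun k => Nat.iter (ns (fst (fst t) k) - j) f a) (snd (fst t)) /\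
     conv d (fun k => Nat.iter (ns (fst (fst t) k) - j) f b) (snd t)).
  set (link := fun (t t' : (nat -> nat) * X * X) =>
     exists sg, (forall k, (k <= sg k)%nat) /\ forall k, fst (fst t') k = fst (fst t) (sg k)).
  assert (Hstep : forall j (psi : nat -> nat), (forall k, (k <= psi k)%nat) ->
     exists t, link (psi, a, a) t /\ Inv j t).
  { intros j psi Hpsi.
    destruct (seqcompact d hd hX (fun k => Nat.iter (ns (psi k) - j) f a)) as [c1 [s1 [Hs1 Hc1]]].
    destruct (seqcompact d hd hX (fun k => Nat.iter (ns (psi (s1 k)) - j) f b)) as [c2 [s2 [Hs2 Hc2]]].
    exists (fun k => psi (s1 (s2 k)), c1, c2). split.
    - exists (fun k => s1 (s2 k)). split; [|reflexivity].
      intro k. specialize (Hs1 (s2 k)). specialize (Hs2 k). lia.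
    - split; [|split]; simpl.
      + intro k. specialize (Hpsi (s1 (s2 k))). specialize (Hs1 (s2 k)). specialize (Hs2 k). lia.
      + exact (conv_sub d _ _ s2 Hc1 Hs2).
      + exact Hc2. }
  destruct (Hstep 0%nat (fun k => k) (fun k => le_n k)) as [t0 [_ Ht0]].
  destruct (dc Inv link t0 Ht0) as [s Hs].
  { intros j t Hi. destruct (Hstep (S j) (fst (fst t)) (proj1 Hi)) as [t' [Hl Ht']].
    exists t'. split; auto. }
  set (u := fun j => snd (fst (s j))). set (v := fun j => snd (s j)).
  set (psi := fun j => fst (fst (s j))).
  assert (Hpsi : forall j k, (k <= psi j k)%nat) by (intros j; apply (Hs j)).
  assert (Hns : forall j k, (k + K <= ns (psi j k))%nat).
  { intros j k. pose proof (Hpsi j k). pose proof (proj1 (Hns0 (psi j k))). lia. }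
  assert (F1a : forall j, f (u (S j)) = u j).
  { intro j. destruct (proj2 (Hs j)) as [sg [Hsg Hsgk]].
    destruct (proj1 (Hs (S j))) as [_ [Hu _]].
    destruct (proj1 (Hs j)) as [_ [Huj _]].
    pose proof (conv_map d hd f _ _ hf Hu) as H1.
    pose proof (conv_sub d _ _ sg Huj Hsg) as H2.
    apply (conv_unique d hd _ _ _ H1).
    apply (conv_ev d _ _ _ (S j)) with (2 := H2).
    intros k Hk. rewrite <- Hsgk. fold (psi (S j)).
    specialize (Hns (S j) k).
    replace (ns (psi (S j) k) - j)%nat with (S (ns (psi (S j) k) - S j)) by lia.
    reflexivity. }
  assert (F1b : forall j, f (v (S j)) = v j).
  { intro j. destruct (proj2 (Hs j)) as [sg [Hsg Hsgk]].
    destruct (proj1 (Hs (S j))) as [_ [_ Hu]].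
    destruct (proj1 (Hs j)) as [_ [_ Huj]].
    pose proof (conv_map d hd f _ _ hf Hu) as H1.
    pose proof (conv_sub d _ _ sg Huj Hsg) as H2.
    apply (conv_unique d hd _ _ _ H1).
    apply (conv_ev d _ _ _ (S j)) with (2 := H2).
    intros k Hk. rewrite <- Hsgk. fold (psi (S j)).
    specialize (Hns (S j) k).
    replace (ns (psi (S j) k) - j)%nat with (S (ns (psi (S j) k) - S j)) by lia.
    reflexivity. }
  assert (F2 : forall j, d (u j) (v j) <= e).
  { intro j. destruct (proj1 (Hs j)) as [_ [Hu Hv]].
    apply (conv_dist_le d hd _ _ _ _ e j Hu Hv). intros k Hk. apply Hab.
    specialize (Hns j k). fold (psi j). lia. }
  assert (F3 : forall i, d (Nat.iter i f (u 0%nat)) (Nat.iter i f (v 0%nat)) <= e).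
  { intro i. destruct (proj1 (Hs 0%nat)) as [_ [Hu Hv]].
    pose proof (conv_map d hd _ _ _ (iter_cont d f hf i) Hu) as H1.
    pose proof (conv_map d hd _ _ _ (iter_cont d f hf i) Hv) as H2.
    apply (conv_dist_le d hd _ _ _ _ e 0 H1 H2). intros k _.
    rewrite <- !Nat.iter_add. apply Hab. specialize (Hns 0%nat k). fold (psi 0%nat). lia. }
  assert (F4 : tau <= d (u 0%nat) (v 0%nat)).
  { destruct (proj1 (Hs 0%nat)) as [_ [Hu Hv]].
    apply (conv_dist_ge d hd _ _ _ _ tau 0 Hu Hv). intros k _.
    rewrite Nat.sub_0_r. apply Hns0. }
  set (x := fun z : Z => if (0 <=? z)%Z then Nat.iter (Z.to_nat z) f (u 0%nat) else u (Z.to_nat (- z))).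
  set (y := fun z : Z => if (0 <=? z)%Z then Nat.iter (Z.to_nat z) f (v 0%nat) else v (Z.to_nat (- z))).
  assert (Hx : in_Xf f x /\ in_Xf f y).
  { split; intro i; unfold x, y; destruct (Z.leb_spec 0 i) as [Hi|Hi].
    - rewrite (proj2 (Z.leb_le 0 (i + 1)) ltac:(lia)).
      replace (Z.to_nat (i + 1)) with (S (Z.to_nat i)) by lia. reflexivity.
    - destruct (Z.eq_dec i (-1)) as [->|Hne].
      + simpl. apply F1a.
      + rewrite (proj2 (Z.leb_gt 0 (i + 1)) ltac:(lia)).
        replace (Z.to_nat (- i)) with (S (Z.to_nat (- (i + 1)))) by lia. apply F1a.
    - rewrite (proj2 (Z.leb_le 0 (i + 1)) ltac:(lia)).
      replace (Z.to_nat (i + 1)) with (S (Z.to_nat i)) by lia. reflexivity.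
    - destruct (Z.eq_dec i (-1)) as [->|Hne].
      + simpl. apply F1b.
      + rewrite (proj2 (Z.leb_gt 0 (i + 1)) ltac:(lia)).
        replace (Z.to_nat (- i)) with (S (Z.to_nat (- (i + 1)))) by lia. apply F1b. }
  assert (Hxy : x = y).
  { apply hexp; try apply Hx. intro i. unfold x, y.
    destruct (0 <=? i)%Z; [apply F3|apply F2]. }
  assert (H0 : x 0%Z = y 0%Z) by (rewrite Hxy; reflexivity).
  unfold x, y in H0. simpl in H0. rewrite H0, d_refl in F4 by auto. lra.
Qed.

Theorem proposition1p1 (X : Type) (d : X -> X -> R) (f : X -> X)
  (hd : is_metric d) (hX : is_compact d) (hf : is_continuous d f)
  (hce : c_expansive d f \/ equicontinuous d f)
  (hsh : shadowing d f) :
  limit_shadowing d f.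
Proof.
  intros xs Hxs.
  assert (Rd : forall r, 0 <= r -> R_dist r 0 = r).
  { intros r Hr. unfold R_dist. rewrite Rminus_0_r, Rabs_pos_eq; auto. }
  destruct hce as [[e [He hexp]]|heq].
  - destruct (full_shadow d f hd hX hf hsh xs Hxs (e / 2)) as [y0 [K0 H0]]; [lra|].
    exists y0. intros tau Htau.
    destruct (full_shadow d f hd hX hf hsh xs Hxs (Rmin (tau / 4) (e / 2))) as [z [K Hz]].
    { apply Rmin_glb_lt; lra. }
    assert (Hab : forall n, (Nat.max K0 K <= n)%nat ->
              d (Nat.iter n f y0) (Nat.iter n f z) <= e).
    { intros n Hn. specialize (H0 n ltac:(lia)). specialize (Hz n ltac:(lia)).
      pose proof (Rmin_r (tau / 4) (e / 2)).
      pose proof (d_tri d hd (Nat.iter n f y0) (xs n) (Nat.iter n f z)).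
      rewrite (d_sym d hd (Nat.iter n f y0) (xs n)) in *. lra. }
    destruct (exp_asym d f hd hX hf e He hexp y0 z _ Hab (tau / 2)) as [N HN]; [lra|].
    exists (Nat.max N K). intros n Hn. rewrite Rd by apply (d_nonneg d hd).
    specialize (HN n ltac:(lia)). specialize (Hz n ltac:(lia)).
    pose proof (Rmin_l (tau / 4) (e / 2)).
    pose proof (d_tri d hd (xs n) (Nat.iter n f z) (Nat.iter n f y0)).
    rewrite (d_sym d hd (Nat.iter n f z) (Nat.iter n f y0)) in *. lra.
  - destruct (functional_choice (fun (k : nat) (p : X * nat) =>
        forall i, (snd p <= i)%nat -> d (xs i) (Nat.iter i f (fst p)) <= / INR (S k))) as [Y HY].
    { intro k. destruct (full_shadow d f hd hX hf hsh xs Hxs (/ INR (S k)) (inv_Sk_pos k))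
        as [z [K Hz]]. exists (z, K). exact Hz. }
    destruct (seqcompact d hd hX (fun k => fst (Y k))) as [c [sg [Hsg Hc]]].
    exists c. intros tau Htau.
    destruct (heq (tau / 2)) as [eta [Heta Heq]]; [lra|].
    destruct (Hc eta Heta) as [N1 HN1]. destruct (archi (tau / 2)) as [N2 HN2]; [lra|].
    set (k := Nat.max N1 N2).
    exists (snd (Y (sg k))). intros n Hn. rewrite Rd by apply (d_nonneg d hd).
    specialize (HY (sg k) n Hn). specialize (HN1 k ltac:(unfold k; lia)).
    specialize (HN2 (sg k) ltac:(specialize (Hsg k); unfold k in *; lia)).
    specialize (Heq _ _ (Rlt_le _ _ HN1) n).
    pose proof (d_tri d hd (xs n) (Nat.iter n f (fst (Y (sg k)))) (Nat.iter n f c)).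
    lra.
Qed.
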